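(* Let $\{N_i(t_i),t_i\ge0\}$, $i=1,\dots,d$, be independent simple counting processes, $\mathcal{F}^{(i)}(t_i)=\sigma(N_i(s_i),s_i\le t_i)$, and $\mathcal{F}(\mathbf{t})=\bigvee_{i=1}^d\mathcal{F}^{(i)}(t_i)$ for $\mathbf{t}=(t_1,\dots,t_d)\in\mathbb{R}^d_+$. For $\boldsymbol{\Lambda}=(\lambda_1,\dots,\lambda_d)$ with all $\lambda_i>0$, let $Y(\mathbf{t})=\sum_{i=1}^dN_i(t_i)\ln(u)-\boldsymbol{\Lambda}\cdot\mathbf{t}\,(u-1)$, $0<u\le1$. Then $\{\exp(Y(\mathbf{t})),\mathbf{t}\in\mathbb{R}^d_+\}$ is a multiparameter martingale with respect to $\{\mathcal{F}(\mathbf{t})\}$ (for every $u\in(0,1]$) if and only if $\{\sum_{i=1}^dN_i(t_i),\mathbf{t}\in\mathbb{R}^d_+\}$ is a multiparameter Poisson process with transition parameter $\boldsymbol{\Lambda}$.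
   Context: $\boldsymbol{\Lambda}\cdot\mathbf{t}=\sum_i\lambda_it_i$; $\preceq$ is the componentwise order, $\prec$ the strict relation. A simple counting process is a nonnegative-integer-valued, nondecreasing process starting at 0 with jumps of size 1. A multiparameter Poisson process with transition parameter $\boldsymbol{\Lambda}$ is a nonnegative-integer-valued random field on $\mathbb{R}^d_+$, 0 at $\mathbf{0}$, nondecreasing in $\preceq$, with independent increments along chains $\mathbf{0}=\mathbf{t}^{(0)}\prec\dots\prec\mathbf{t}^{(m)}$, stationary increments, and $\mathcal{N}(\mathbf{t})\sim$ Poisson$(\boldsymbol{\Lambda}\cdot\mathbf{t})$. A multiparameter martingale w.r.t. a filtration increasing in $\preceq$ is an integrable adapted process with $\mathbb{E}(M(\mathbf{t})\mid\mathcal{F}(\mathbf{s}))=M(\mathbf{s})$ a.s. for $\mathbf{s}\preceq\mathbf{t}$. *)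

(* Defs.v *)
From HB Require Import structures.
From mathcomp Require Import all_boot all_order all_algebra.
From mathcomp Require Import all_classical all_reals all_analysis.
Set Implicit Arguments. Unset Strict Implicit. Unset Printing Implicit Defensive.
Import Order.TTheory GRing.Theory Num.Theory.
Local Open Scope classical_set_scope.
Local Open Scope ring_scope.

Section Defs.
Variables (dsp : measure_display) (T : measurableType dsp) (R : realType).
Variable (P : probability T R).

Definition nonneg_pt (dim : nat) (t : 'I_dim -> R) := forall i, 0 <= t i.
Definition pt_le (dim : nat) (s t : 'I_dim -> R) := forall i, s i <= t i.
Definition pt_lt (dim : nat) (s t : 'I_dim -> R) := pt_le s t /\ s <> t.
Definition pt_dot (dim : nat) (L t : 'I_dim -> R) := \sum_(i < dim) L i * t i.

Definition simple_counting_process (N : R -> T -> nat) :=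
  (forall t k, 0 <= t -> measurable [set w | N t w = k]) /\
  (forall w, N 0 w = 0%N) /\
  (forall w s t, 0 <= s -> s <= t -> (N s w <= N t w)%N) /\
  (* jumps of size one: the total jump across any time t is at most 1 *)
  (forall w t, 0 <= t -> exists2 e : R, 0 < e &
     forall s s', 0 <= s -> t - e < s -> s <= t -> t <= s' -> s' < t + e ->
       (N s' w <= (N s w).+1)%N).

Definition natural_sigma (N : R -> T -> nat) (t : R) : set (set T) :=
  <<s setT, [set A | exists s (B : set nat), 0 <= s /\ s <= t /\
                          A = N s @^-1` B] >>.

Definition process_sigma (N : R -> T -> nat) : set (set T) :=
  <<s setT, [set A | exists s (B : set nat), 0 <= s /\ A = N s @^-1` B] >>.

Definition independent_processes (dim : nat) (N : 'I_dim -> R -> T -> nat) :=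
  forall A : 'I_dim -> set T, (forall i, process_sigma (N i) (A i)) ->
    P (\bigcap_(i in [set: 'I_dim]) A i) = (\prod_(i < dim) P (A i))%E.

Definition joint_filtration (dim : nat) (N : 'I_dim -> R -> T -> nat)
  (t : 'I_dim -> R) : set (set T) :=
  <<s setT, [set A | exists i s (B : set nat), 0 <= s /\ s <= t i /\
                          A = N i s @^-1` B] >>.

(* multiparameter martingale w.r.t. a filtration F (increasing in pt_le);
   E(M t | F s) = M s a.s. is written out as the defining property of the
   conditional expectation (M s being F s-measurable and integrable). *)
Definition mp_martingale (dim : nat) (F : ('I_dim -> R) -> set (set T))
  (M : ('I_dim -> R) -> T -> R) :=
  (forall t, nonneg_pt t -> P.-integrable setT (fun w => (M t w)%:E)) /\
  (forall t, nonneg_pt t -> forall B : set R, measurable B ->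
      F t (M t @^-1` B)) /\
  (forall s t, nonneg_pt s -> pt_le s t -> forall A, F s A ->
      (\int[P]_(w in A) (M t w)%:E = \int[P]_(w in A) (M s w)%:E)%E).

Definition independent_rvs (m : nat) (X : 'I_m -> T -> nat) :=
  forall B : 'I_m -> set nat,
    P (\bigcap_(k in [set: 'I_m]) (X k @^-1` B k)) =
    (\prod_(k < m) P (X k @^-1` B k))%E.

Definition mp_poisson (dim : nat) (L : 'I_dim -> R)
  (S : ('I_dim -> R) -> T -> nat) :=
  (forall t k, nonneg_pt t -> measurable [set w | S t w = k]) /\
  (forall w, S (fun _ => 0) w = 0%N) /\
  (forall w s t, nonneg_pt s -> pt_le s t -> (S s w <= S t w)%N) /\
  (forall (m : nat) (c : nat -> 'I_dim -> R),
      c 0%N = (fun _ => 0) -> (forall k, (k < m)%N -> pt_lt (c k) (c k.+1)) ->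
      independent_rvs (fun (k : 'I_m) w => (S (c k.+1) w - S (c k) w)%N)) /\
  (forall s t s' t', nonneg_pt s -> pt_le s t -> nonneg_pt s' -> pt_le s' t' ->
      (forall i, t i - s i = t' i - s' i) ->
      forall B : set nat,
        P [set w | B (S t w - S s w)%N] = P [set w | B (S t' w - S s' w)%N]) /\
  (forall t k, nonneg_pt t ->
      P [set w | S t w = k] =
      (expR (- pt_dot L t) * (pt_dot L t) ^+ k / (k`!)%:R)%:E).

End Defs.

(* Main.v *)
Require Import Defs.
From HB Require Import structures.
From mathcomp Require Import all_boot all_order all_algebra.
From mathcomp Require Import all_classical all_reals all_analysis.
From mathcomp Require Import measurable_realfun.
From mathcomp Require Import ring lra.
Import Order.TTheory GRing.Theory Num.Theory.
Import numFieldNormedType.Exports.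
Local Open Scope classical_set_scope.
Local Open Scope ring_scope.
Set Implicit Arguments. Unset Strict Implicit. Unset Printing Implicit Defensive.
Section generic.
Context {d : measure_display} {T : measurableType d} {R : realType}.
Implicit Types (G : set (set T)) (X Y : T -> nat).

Definition nfm G X := forall k, G [set w | X w = k].

Lemma saT G : sigma_algebra setT G -> G setT.
Proof. by case=> G0 GC _; rewrite -(setD0 setT); apply: GC. Qed.

Lemma saU G : sigma_algebra setT G ->
  forall F : (set T)^nat, (forall k, G (F k)) -> G (\bigcup_k F k).
Proof. by case. Qed.

Lemma saC G : sigma_algebra setT G -> forall A, G A -> G (~` A).
Proof. by case=> _ GC _ A GA; rewrite -setTD; apply: GC. Qed.

Lemma sa0 G : sigma_algebra setT G -> G set0.
Proof. by case. Qed.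

Lemma saI G : sigma_algebra setT G -> forall A B, G A -> G B -> G (A `&` B).
Proof.
move=> sG A B GA GB; rewrite -[A `&` B]setCK setCI; apply: saC => //.
rewrite -bigcup2E; apply: saU => // -[|[|n]] /=; rewrite /bigcup2 /=.
- exact: saC.
- exact: saC.
- exact: sa0.
Qed.

Lemma saU_in G : sigma_algebra setT G ->
  forall (F : (set T)^nat) (Q : set nat), (forall k, Q k -> G (F k)) ->
  G (\bigcup_(k in Q) F k).
Proof.
move=> sG F Q GF.
have -> : \bigcup_(k in Q) F k =
    \bigcup_k (if pselect (Q k) then F k else set0).
  apply/seteqP; split=> w /=.
    by move=> [k Qk Fw]; exists k => //; destruct (pselect (Q k)).
  by move=> [k _]; destruct (pselect (Q k)) as [Qk|] => // Fw; exists k.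
apply: saU => // k; destruct (pselect (Q k)) as [Qk|]; [exact: GF|exact: sa0].
Qed.

Lemma nfm_pre G X : sigma_algebra setT G -> nfm G X -> forall B, G (X @^-1` B).
Proof.
move=> sG hX B; have -> : X @^-1` B = \bigcup_(k in B) [set w | X w = k].
  apply/seteqP; split => w /=; first by move=> Bw; exists (X w).
  by move=> [k Bk /= ->].
exact: saU_in.
Qed.

Lemma nfm_op G X Y (h : nat -> nat -> nat) : sigma_algebra setT G ->
  nfm G X -> nfm G Y -> nfm G (fun w => h (X w) (Y w)).
Proof.
move=> sG hX hY k.
have -> : [set w | h (X w) (Y w) = k] =
    \bigcup_j ([set w | Y w = j] `&` X @^-1` [set x | h x j = k]).
  apply/seteqP; split=> w /=; first by move=> hw; exists (Y w).
  by move=> [j _ [<-]].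
apply: saU => // j; apply: saI => //; exact: nfm_pre.
Qed.

Lemma nfm_cst G c : sigma_algebra setT G -> nfm G (fun=> c).
Proof.
move=> sG k; case: (eqVneq c k) => [->|ck].
  rewrite (_ : [set w | k = k] = setT); first exact: saT.
  by apply/seteqP.
rewrite (_ : [set w | c = k] = set0); first exact: sa0.
by apply/seteqP; split=> w //= ck'; rewrite ck' eqxx in ck.
Qed.

Lemma nfm_sum G (I : Type) (s : seq I) (X : I -> T -> nat) :
  sigma_algebra setT G -> (forall i, nfm G (X i)) ->
  nfm G (fun w => (\sum_(i <- s) X i w)%N).
Proof.
move=> sG hX; elim: s => [|a s IH].
  have -> : (fun w => (\sum_(i <- [::]) X i w)%N) = fun=> 0%N.
    by apply: funext => w; rewrite big_nil.
  exact: nfm_cst.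
have -> : (fun w => (\sum_(i <- a :: s) X i w)%N) =
    fun w => (X a w + \sum_(i <- s) X i w)%N.
  by apply: funext => w; rewrite big_cons.
exact: nfm_op.
Qed.

Lemma mfun_nat X (g : nat -> \bar R) (D : set T) :
  nfm measurable X -> @measurable_fun _ _ T (\bar R) D (fun w => g (X w)).
Proof.
move=> hX mD Y _; apply: measurableI => //.
exact: (nfm_pre (sigma_algebra_measurable T) hX (g @^-1` Y)).
Qed.

Lemma mfun_natR X (g : nat -> R) (D : set T) :
  nfm measurable X -> @measurable_fun _ _ T R D (fun w => g (X w)).
Proof.
move=> hX mD Y _; apply: measurableI => //.
exact: (nfm_pre (sigma_algebra_measurable T) hX (g @^-1` Y)).
Qed.

Variable P : probability T R.

Lemma int_disc X (g : nat -> \bar R) (A : set T) :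
  nfm measurable X -> measurable A -> (forall k, 0 <= g k)%E ->
  (\int[P]_(w in A) g (X w) =
   \sum_(k <oo) (g k * P (A `&` [set w | X w = k])))%E.
Proof.
move=> hX mA g0.
have eA : A = \bigcup_k (A `&` [set w | X w = k]).
  apply/seteqP; split=> w /=; first by move=> Aw; exists (X w).
  by case=> k _ [].
have mF k : measurable (A `&` [set w | X w = k]) by apply: measurableI.
have tr : trivIset setT (fun k => A `&` [set w | X w = k]).
  by move=> i j _ _ [w [[_ Hi] [_ Hj]]]; rewrite -Hi -Hj.
have mf : measurable_fun (\bigcup_k (A `&` [set w | X w = k]))
   (fun w => g (X w)) by apply: mfun_nat.
rewrite [in LHS]eA ge0_integral_bigcup //.
apply: eq_eseriesr => k _.
rewrite -(integral_cst P (mF k)); apply: eq_integral => w; rewrite inE => -[_ /= Hw]; by rewrite Hw.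
Qed.

Lemma cunion_indep (I : countType) (E : I -> set T) (A : set T) (c : R) :
  (forall i, measurable (E i)) -> measurable A -> 0 <= c ->
  (forall i j w, E i w -> E j w -> i = j) ->
  (forall i, P (E i `&` A) = P (E i) * c%:E)%E ->
  P ((\bigcup_(i in setT) E i) `&` A) = (P (\bigcup_(i in setT) E i) * c%:E)%E.
Proof.
move=> mE mA c0 dE hE.
pose F n := if @pickle_inv I n is Some i then E i else set0.
have eU : \bigcup_(i in setT) E i = \bigcup_n F n.
  apply/seteqP; split=> w /=.
    by move=> [i _ Ew]; exists (pickle i) => //; rewrite /F pickleK_inv.
  move=> [n _]; rewrite /F; case: pickle_inv => [i Ew|//].
  by exists i.
have mF n : measurable (F n) by rewrite /F; case: pickle_inv.
have tF : trivIset setT F.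
  move=> i j _ _ [w []]; rewrite /F.
  case Ei: pickle_inv => [a|//]; case Ej: pickle_inv => [b|//] Ea Eb.
  have := @pickle_invK I i; have := @pickle_invK I j.
  by rewrite Ei Ej /= (dE _ _ _ Ea Eb) => -> ->.
rewrite eU setI_bigcupl measure_semi_bigcup //; first last.
- by apply: bigcup_measurable => k _; apply: measurableI.
- move=> i j _ _ [w [[Fi _] [Fj _]]]; apply: tF => //; by exists w.
- by move=> i; apply: measurableI.
rewrite measure_semi_bigcup //; last by apply: bigcup_measurable.
rewrite muleC -nneseriesZl//.
apply: eq_eseriesr => n _; rewrite /F; case: pickle_inv => [i|].
  by rewrite muleC; exact: hE.
by rewrite set0I measure0 mule0.
Qed.

End generic.
Section series.
Context {R : realType}.

Lemma series_shift (f : nat -> R) : (forall j, 0 <= f j) ->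
  (\sum_(j <oo) (f j)%:E = (f 0%N)%:E + \sum_(j <oo) (f j.+1)%:E)%E.
Proof.
move=> f0.
have -> : (\sum_(j <oo) (f j.+1)%:E = \sum_(0 <= i <oo) (fun k => (f k)%:E) (i + 1)%N)%E.
  by apply: eq_eseriesr => i _; rewrite addn1.
rewrite (@nneseries_addn R (fun k => (f k)%:E) 1); last by move=> i; rewrite lee_fin.
by apply: nneseries_recl => // k _; rewrite lee_fin.
Qed.

Lemma EFin_series (f : nat -> R) : cvgn (series f) ->
  (\sum_(j <oo) (f j)%:E)%E = (limn (series f))%:E.
Proof.
move=> cf; rewrite -EFin_lim//; congr (limn _); apply/funext => n.
by rewrite /series /= sumEFin.
Qed.

Definition pois (mu : R) (m : nat) : R := expR (- mu) * mu ^+ m / (m`!)%:R.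

Lemma pois_ge0 mu m : 0 <= mu -> 0 <= pois mu m.
Proof.
move=> mu0; rewrite /pois; apply: divr_ge0; last exact: ler0n.
by apply: mulr_ge0; [exact: expR_ge0| exact: exprn_ge0].
Qed.

Lemma pois_pgf mu u : 0 <= mu -> 0 <= u ->
  (expR (mu * (u - 1)))%:E = (\sum_(m <oo) ((u ^+ m * pois mu m)%:E))%E.
Proof.
move=> mu0 u0.
have e m : u ^+ m * pois mu m = expR (- mu) * exp_coeff (mu * u) m.
  rewrite /pois exp_coeffE /= exprMn; ring.
under eq_eseriesr do rewrite e EFinM.
rewrite nneseriesZl; last by move=> i _; rewrite lee_fin exp_coeff_ge0// mulr_ge0.
rewrite EFin_series; last exact: is_cvg_series_exp_coeff.
by rewrite -EFinM -expRD; congr (expR _)%:E; rewrite mulrBr mulr1 addrC.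
Qed.

Lemma pois_sum mu : 0 <= mu -> (\sum_(m <oo) ((pois mu m)%:E))%E = 1%E.
Proof.
move=> mu0; have := pois_pgf mu0 ler01.
rewrite subrr mulr0 expR0 => ->; apply: eq_eseriesr => m _.
by rewrite expr1n mul1r.
Qed.

Lemma fin_of_le (X : \bar R) (C : R) : (0 <= X)%E -> (X <= C%:E)%E ->
  X = (fine X)%:E.
Proof.
move=> X0 XC; rewrite fineK// ge0_fin_numE//; exact: (le_lt_trans XC (ltry _)).
Qed.

Lemma small_le0 (x K : R) : 0 <= K -> (forall u, 0 < u -> u <= 1 -> x <= u * K) ->
  x <= 0.
Proof.
move=> K0 H; apply/ler_addgt0Pr => e e0; rewrite add0r.
pose u := Num.min 1 (e / (K + 1)).
have K1 : 0 < K + 1 by rewrite ltr_wpDl.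
have u0 : 0 < u by rewrite lt_min ltr01 divr_gt0.
have u1 : u <= 1 by rewrite ge_min lexx.
apply: (le_trans (H u u0 u1)).
have ue : u <= e / (K + 1) by rewrite ge_min lexx orbT.
apply: (le_trans (ler_wpM2r K0 ue)).
rewrite -mulrA [_^-1 * K]mulrC -[X in _ <= X]mulr1.
apply: ler_wpM2l; first exact: ltW.
by rewrite ler_pdivrMr// mul1r lerDl.
Qed.

Lemma pgf_step (a b : nat -> R) (Ca Cb : R) :
  (forall j, 0 <= a j) -> (forall j, 0 <= b j) ->
  (\sum_(j <oo) (a j)%:E <= Ca%:E)%E -> (\sum_(j <oo) (b j)%:E <= Cb%:E)%E ->
  (forall u : R, 0 < u -> u <= 1 ->
     (\sum_(j <oo) ((u ^+ j * a j)%:E) = \sum_(j <oo) ((u ^+ j * b j)%:E))%E) ->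
  a 0%N = b 0%N /\
  (forall u : R, 0 < u -> u <= 1 ->
     (\sum_(j <oo) ((u ^+ j * a j.+1)%:E) = \sum_(j <oo) ((u ^+ j * b j.+1)%:E))%E).
Proof.
move=> a0 b0 hCa hCb H.
have gen (c : nat -> R) (C : R) (u : R) : (forall j, 0 <= c j) ->
    (\sum_(j <oo) (c j)%:E <= C%:E)%E -> 0 < u -> u <= 1 ->
    [/\ (\sum_(j <oo) ((u ^+ j * c j)%:E) =
        (c 0%N)%:E + u%:E * \sum_(j <oo) ((u ^+ j * c j.+1)%:E))%E,
      (0 <= \sum_(j <oo) ((u ^+ j * c j.+1)%:E))%E &
      (\sum_(j <oo) ((u ^+ j * c j.+1)%:E) <= C%:E)%E].
  move=> c0 hC u0 u1; split.
  - rewrite series_shift; last by move=> j; rewrite mulr_ge0// exprn_ge0// ltW.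
    rewrite expr0 mul1r -nneseriesZl; last first.
      by move=> j _; rewrite lee_fin mulr_ge0// exprn_ge0// ltW.
    by congr (_ + _)%E; apply: eq_eseriesr => j _; rewrite -EFinM exprS mulrA.
  - by apply: nneseries_ge0 => j _ _; rewrite lee_fin mulr_ge0// exprn_ge0// ltW.
  - apply: le_trans hC; rewrite (series_shift c0).
    apply: (@le_trans _ _ (\sum_(j <oo) (c j.+1)%:E)%E); last first.
      by rewrite leeDr// lee_fin.
    apply: lee_nneseries => j _; first by rewrite lee_fin mulr_ge0// exprn_ge0// ltW.
    by rewrite lee_fin ler_piMl// exprn_ile1// ltW.
have key (u : R) : 0 < u -> u <= 1 -> `|a 0%N - b 0%N| <= u * (Ca + Cb) /\
    (a 0%N = b 0%N -> (\sum_(j <oo) ((u ^+ j * a j.+1)%:E) =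
       \sum_(j <oo) ((u ^+ j * b j.+1)%:E))%E).
  move=> u0 u1.
  have [ea ga la] := gen a Ca u a0 hCa u0 u1.
  have [eb gb lb] := gen b Cb u b0 hCb u0 u1.
  move: (H u u0 u1) ga la gb lb; rewrite ea eb.
  move: (\sum_(j <oo) ((u ^+ j * a j.+1)%:E))%E (\sum_(j <oo) ((u ^+ j * b j.+1)%:E))%E.
  move=> Xa Xb E ga la gb lb.
  rewrite (fin_of_le ga la) (fin_of_le gb lb) in E *.
  move: E; rewrite -!EFinM -!EFinD => -[E].
  have fa0 : 0 <= fine Xa by rewrite fine_ge0.
  have fb0 : 0 <= fine Xb by rewrite fine_ge0.
  have fa1 : fine Xa <= Ca by rewrite -lee_fin -(fin_of_le ga la).
  have fb1 : fine Xb <= Cb by rewrite -lee_fin -(fin_of_le gb lb).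
  move: (fine Xa) (fine Xb) E fa0 fb0 fa1 fb1 => xa xb E fa0 fb0 fa1 fb1.
  split.
    have -> : a 0%N - b 0%N = u * (xb - xa) by rewrite mulrBr; lra.
    rewrite normrM gtr0_norm//; apply: ler_wpM2l; first exact: ltW.
    rewrite ler_norml; apply/andP; split; lra.
  move=> ab; rewrite ab in E; move/addrI: E => /mulfI E.
  by rewrite E// gt_eqF.
have ab : a 0%N = b 0%N.
  apply/eqP; rewrite -subr_eq0 -normr_eq0 eq_le normr_ge0 andbT.
  apply: (@small_le0 _ (Ca + Cb)).
    have : (0 <= \sum_(j <oo) (a j)%:E)%E by apply: nneseries_ge0 => j _ _; rewrite lee_fin.
    have : (0 <= \sum_(j <oo) (b j)%:E)%E by apply: nneseries_ge0 => j _ _; rewrite lee_fin.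
    move=> /le_trans/(_ hCb); rewrite lee_fin => ? /le_trans/(_ hCa); rewrite lee_fin => ?.
    exact: addr_ge0.
  by move=> u u0 u1; case: (key u u0 u1).
split=> // u u0 u1; by case: (key u u0 u1) => _ /(_ ab).
Qed.

Lemma pgf_uniq (a b : nat -> R) (Ca Cb : R) :
  (forall j, 0 <= a j) -> (forall j, 0 <= b j) ->
  (\sum_(j <oo) (a j)%:E <= Ca%:E)%E -> (\sum_(j <oo) (b j)%:E <= Cb%:E)%E ->
  (forall u : R, 0 < u -> u <= 1 ->
     (\sum_(j <oo) ((u ^+ j * a j)%:E) = \sum_(j <oo) ((u ^+ j * b j)%:E))%E) ->
  forall m, a m = b m.
Proof.
move=> a0 b0 hCa hCb H m; elim: m a b a0 b0 hCa hCb H => [|m IH] a b a0 b0 hCa hCb H.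
  by case: (pgf_step a0 b0 hCa hCb H).
have [_ H'] := pgf_step a0 b0 hCa hCb H.
apply: (IH (fun j => a j.+1) (fun j => b j.+1)) => //.
- apply: le_trans hCa; rewrite (series_shift a0) leeDr// lee_fin//.
- apply: le_trans hCb; rewrite (series_shift b0) leeDr// lee_fin//.
Qed.

End series.
Section generic2.
Context {d : measure_display} {T : measurableType d} {R : realType}.
Variable P : probability T R.

Lemma meas_disc (X : T -> nat) (A : set T) : nfm measurable X -> measurable A ->
  P A = (\sum_(k <oo) P (A `&` [set w | X w = k]))%E.
Proof.
move=> hX mA.
have eA : A = \bigcup_k (A `&` [set w | X w = k]).
  apply/seteqP; split=> w /=; first by move=> Aw; exists (X w).
  by case=> k _ [].
have mF k : measurable (A `&` [set w | X w = k]).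
  by apply: measurableI => //; exact: hX.
rewrite [in LHS]eA measure_semi_bigcup //; last by rewrite -eA.
by move=> i j _ _ [w [[_ Hi] [_ Hj]]]; rewrite -Hi -Hj.
Qed.

Lemma int_part (X : T -> nat) (A : set T) (f : T -> \bar R) :
  nfm measurable X -> measurable A -> measurable_fun A f ->
  (forall w, A w -> 0 <= f w)%E ->
  (\int[P]_(w in A) f w = \sum_(k <oo) \int[P]_(w in A `&` [set w | X w = k]) f w)%E.
Proof.
move=> hX mA mf f0.
have eA : A = \bigcup_k (A `&` [set w | X w = k]).
  apply/seteqP; split=> w /=; first by move=> Aw; exists (X w).
  by case=> k _ [].
have mF k : measurable (A `&` [set w | X w = k]).
  by apply: measurableI => //; exact: hX.
have tr : trivIset setT (fun k => A `&` [set w | X w = k]).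
  by move=> i j _ _ [w [[_ Hi] [_ Hj]]]; rewrite -Hi -Hj.
rewrite [in LHS]eA ge0_integral_bigcup //; rewrite -?eA //.
Qed.

Lemma fineP (A : set T) : measurable A -> P A = (fine (P A))%:E.
Proof.
move=> mA; apply: (@fin_of_le _ _ 1); first exact: measure_ge0.
exact: probability_le1.
Qed.

Lemma fineP_ge0 (A : set T) : 0 <= fine (P A).
Proof. by apply: fine_ge0; exact: measure_ge0. Qed.

Lemma ecancel (x : R) (a b : \bar R) : x != 0 -> (x%:E * a = x%:E * b)%E -> a = b.
Proof.
move=> x0 e; have := congr1 (fun z => (x^-1)%:E * z)%E e.
by rewrite !muleA -!EFinM mulVf// !mul1e.
Qed.

End generic2.

Section main.
Context {d : measure_display} {T : measurableType d} {R : realType}.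
Variables (P : probability T R) (dim : nat) (N : 'I_dim -> R -> T -> nat)
  (L : 'I_dim -> R).
Hypothesis hN : forall i, simple_counting_process (N i).
Hypothesis hL : forall i, 0 < L i.

Definition S (t : 'I_dim -> R) w := (\sum_(i < dim) N i (t i) w)%N.
Definition Dinc (s t : 'I_dim -> R) w := (S t w - S s w)%N.
Definition cst_t (u : R) (t : 'I_dim -> R) := expR (- pt_dot L t * (u - 1)).
Definition M (u : R) (t : 'I_dim -> R) w :=
  expR ((\sum_(i < dim) (N i (t i) w)%:R * ln u) - pt_dot L t * (u - 1)).
Definition mu (s t : 'I_dim -> R) := pt_dot L t - pt_dot L s.

Lemma N_meas i r : 0 <= r -> nfm measurable (N i r).
Proof. by move=> r0 k; case: (hN i) => + _; apply. Qed.

Lemma N_0 i w : N i 0 w = 0%N.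
Proof. by case: (hN i) => _ []. Qed.

Lemma N_mono i w r r' : 0 <= r -> r <= r' -> (N i r w <= N i r' w)%N.
Proof. by case: (hN i) => _ [_ [+ _]]; apply. Qed.

Lemma nonneg_le (s t : 'I_dim -> R) : nonneg_pt s -> pt_le s t -> nonneg_pt t.
Proof. by move=> s0 st i; exact: le_trans (s0 i) (st i). Qed.

Lemma S_meas t : nonneg_pt t -> nfm measurable (S t).
Proof.
move=> t0; apply: (nfm_sum (index_enum _) (sigma_algebra_measurable T)) => i.
exact: N_meas.
Qed.

Lemma S_mono s t w : nonneg_pt s -> pt_le s t -> (S s w <= S t w)%N.
Proof. by move=> s0 st; apply: leq_sum => i _; apply: N_mono. Qed.

Lemma Dinc_meas s t : nonneg_pt s -> pt_le s t -> nfm measurable (Dinc s t).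
Proof.
move=> s0 st; apply: (nfm_op (fun a b => a - b)%N (sigma_algebra_measurable T)).
  exact/S_meas/(nonneg_le s0 st).
exact: S_meas.
Qed.

Lemma F_sa t : sigma_algebra setT (joint_filtration N t).
Proof. exact: smallest_sigma_algebra. Qed.

Lemma N_F t i r : 0 <= r -> r <= t i -> nfm (joint_filtration N t) (N i r).
Proof.
move=> r0 rt k; apply: sub_sigma_algebra; exists i, r, [set k].
by split=> //; split.
Qed.

Lemma S_F s t : nonneg_pt s -> pt_le s t -> nfm (joint_filtration N t) (S s).
Proof.
move=> s0 st; apply: (nfm_sum (index_enum _) (F_sa t)) => i.
exact: N_F.
Qed.

Lemma F_meas t A : joint_filtration N t A -> measurable A.
Proof.
apply: smallest_sub; first exact: sigma_algebra_measurable.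
move=> _ [i [r [B [r0 [_ ->]]]]].
exact: (nfm_pre (sigma_algebra_measurable T) (N_meas i r0)).
Qed.

Lemma M_eq u t w : 0 < u -> M u t w = u ^+ S t w * cst_t u t.
Proof.
move=> u0; rewrite /M /cst_t expRD mulNr; congr (_ * _).
rewrite -mulr_suml -natr_sum mulr_natl -lnXn// lnK//.
by rewrite posrE exprn_gt0.
Qed.

Lemma M_fun u t : 0 < u -> M u t = (fun w => (fun k => u ^+ k * cst_t u t) (S t w)).
Proof. by move=> u0; apply: funext => w; rewrite M_eq. Qed.

Lemma cst_mu u s t : cst_t u t * expR (mu s t * (u - 1)) = cst_t u s.
Proof. by rewrite /cst_t /mu -expRD; congr expR; ring. Qed.

Lemma mu_ge0 s t : pt_le s t -> 0 <= mu s t.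
Proof.
move=> st; rewrite /mu /pt_dot -sumrB; apply: sumr_ge0 => i _.
by rewrite -mulrBr; apply: mulr_ge0; [exact: ltW | rewrite subr_ge0].
Qed.

Lemma int_Mt u s t n (B : set T) : 0 < u -> nonneg_pt s -> pt_le s t ->
  measurable B -> B `<=` [set w | S s w = n] ->
  (\int[P]_(w in B) (M u t w)%:E =
   \sum_(m <oo) ((u ^+ (n + m) * cst_t u t)%:E * P (B `&` [set w | Dinc s t w = m])))%E.
Proof.
move=> u0 s0 st mB sB.
rewrite -(int_disc P (g := fun m => (u ^+ (n + m) * cst_t u t)%:E)) //; first last.
- by move=> k; rewrite lee_fin mulr_ge0// ?expR_ge0// exprn_ge0// ltW.
- exact: Dinc_meas.
apply: eq_integral => w; rewrite inE => Bw.
rewrite M_eq// /Dinc -(sB w Bw) subnKC//; exact: S_mono.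
Qed.

Lemma int_Ms u s n (B : set T) : 0 < u ->
  measurable B -> B `<=` [set w | S s w = n] ->
  (\int[P]_(w in B) (M u s w)%:E = (u ^+ n * cst_t u s)%:E * P B)%E.
Proof.
move=> u0 mB sB; rewrite -integral_cst//; apply: eq_integral => w.
by rewrite inE => Bw; rewrite M_eq// (sB w Bw).
Qed.


Definition KP s t (A : set T) := forall m,
  P (A `&` [set w | Dinc s t w = m]) = (P A * (pois (mu s t) m)%:E)%E.

Lemma ptle_refl (s : 'I_dim -> R) : pt_le s s.
Proof. by move=> i. Qed.

Lemma mart_piece s t n (B : set T) : nonneg_pt s -> pt_le s t ->
  measurable B -> B `<=` [set w | S s w = n] ->
  (forall u : R, 0 < u -> u <= 1 ->
     (\int[P]_(w in B) (M u t w)%:E = \int[P]_(w in B) (M u s w)%:E)%E) ->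
  KP s t B.
Proof.
move=> s0 st mB sB H.
pose a m := fine (P (B `&` [set w | Dinc s t w = m])).
pose b m := fine (P B) * pois (mu s t) m.
have mBm m : measurable (B `&` [set w | Dinc s t w = m]).
  by apply: measurableI => //; exact: Dinc_meas.
have ha m : P (B `&` [set w | Dinc s t w = m]) = (a m)%:E by exact: fineP.
have mu0 := mu_ge0 st.
have eab : forall m, a m = b m.
  apply: (@pgf_uniq _ a b 1 1).
  - by move=> j; exact: fineP_ge0.
  - by move=> j; rewrite /b mulr_ge0// ?fineP_ge0// pois_ge0.
  - under eq_eseriesr do rewrite -ha.
    rewrite -meas_disc//; [exact: probability_le1| exact: Dinc_meas].
  - under eq_eseriesr do rewrite /b EFinM.
    rewrite nneseriesZl; last by move=> i _; rewrite lee_fin pois_ge0.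
    by rewrite pois_sum// mule1 -(fineP P mB); exact: probability_le1.
  move=> u u0 u1; have := H u u0 u1.
  rewrite (int_Mt (n:=n) u0 s0 st mB sB) (int_Ms u0 mB sB).
  have -> : (\sum_(m <oo) ((u ^+ (n + m) * cst_t u t)%:E *
              P (B `&` [set w | Dinc s t w = m])) =
            (u ^+ n * cst_t u t)%:E * \sum_(m <oo) ((u ^+ m * a m)%:E))%E.
    rewrite -nneseriesZl; last first.
      by move=> i _; rewrite lee_fin; apply: mulr_ge0; [exact/exprn_ge0/ltW| exact: fineP_ge0].
    apply: eq_eseriesr => m _; rewrite ha -!EFinM; congr EFin.
    by rewrite exprD; ring.
  have -> : ((u ^+ n * cst_t u s)%:E * P B =
      (u ^+ n * cst_t u t)%:E * \sum_(m <oo) ((u ^+ m * b m)%:E))%E.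
    have -> : (\sum_(m <oo) ((u ^+ m * b m)%:E) =
               (fine (P B))%:E * \sum_(m <oo) ((u ^+ m * pois (mu s t) m)%:E))%E.
      rewrite -nneseriesZl; last first.
        by move=> i _; rewrite lee_fin; apply: mulr_ge0; [exact/exprn_ge0/ltW | exact: pois_ge0].
      by apply: eq_eseriesr => m _; rewrite -EFinM /b; congr EFin; ring.
    rewrite -(pois_pgf mu0 (ltW u0)) (fineP P mB) -!EFinM -(cst_mu u s t); congr EFin.
    ring.
  apply: ecancel; apply: mulf_neq0; first by rewrite expf_neq0// gt_eqF.
  by rewrite gt_eqF// expR_gt0.
move=> m; by rewrite ha eab /b EFinM -(fineP P mB).
Qed.

Lemma piece_mart s t n (B : set T) : nonneg_pt s -> pt_le s t ->
  measurable B -> B `<=` [set w | S s w = n] -> KP s t B ->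
  (forall u : R, 0 < u -> u <= 1 ->
     (\int[P]_(w in B) (M u t w)%:E = \int[P]_(w in B) (M u s w)%:E)%E).
Proof.
move=> s0 st mB sB hK u u0 u1.
have mu0 := mu_ge0 st.
rewrite (int_Mt (n:=n) u0 s0 st mB sB) (int_Ms u0 mB sB).
have -> : (\sum_(m <oo) ((u ^+ (n + m) * cst_t u t)%:E *
              P (B `&` [set w | Dinc s t w = m])) =
      (u ^+ n * cst_t u t * fine (P B))%:E *
         \sum_(m <oo) ((u ^+ m * pois (mu s t) m)%:E))%E.
  rewrite -nneseriesZl; last first.
    by move=> i _; rewrite lee_fin; apply: mulr_ge0; [exact/exprn_ge0/ltW | exact: pois_ge0].
  apply: eq_eseriesr => m _; rewrite hK (fineP P mB) -!EFinM; congr EFin.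
  by rewrite exprD; ring.
rewrite -(pois_pgf mu0 (ltW u0)) (fineP P mB) -!EFinM -(cst_mu u s t); congr EFin.
ring.
Qed.

Lemma mart_KP s t : nonneg_pt s -> pt_le s t ->
  (forall u : R, 0 < u -> u <= 1 -> forall A, joint_filtration N s A ->
     (\int[P]_(w in A) (M u t w)%:E = \int[P]_(w in A) (M u s w)%:E)%E) ->
  forall A, joint_filtration N s A -> KP s t A.
Proof.
move=> s0 st H A FA m.
have FB n : joint_filtration N s (A `&` [set w | S s w = n]).
  exact: (saI (@F_sa s) FA (S_F s0 (ptle_refl s) n)).
have KB n := mart_piece s0 st (F_meas (FB n)) (fun w => fun h => proj2 h)
  (fun u u0 u1 => H u u0 u1 _ (FB n)).
have mA := F_meas FA.
have hSs := S_meas s0.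
rewrite (meas_disc P (X := S s)) //; last first.
  by apply: measurableI => //; exact: Dinc_meas.
rewrite (meas_disc P (A := A) (X := S s)) // muleC -nneseriesZl; last first.
  by move=> i _; exact: measure_ge0.
apply: eq_eseriesr => n _; rewrite setIAC KB muleC.
by [].
Qed.

Lemma M_mfun u t (D : set T) : 0 < u -> nonneg_pt t ->
  measurable_fun D (fun w => (M u t w)%:E).
Proof.
move=> u0 t0.
have -> : (fun w => (M u t w)%:E) =
    (fun w => (fun k => (u ^+ k * cst_t u t)%:E) (S t w)).
  by apply: funext => w; rewrite M_eq.
exact: (mfun_nat (fun k => (u ^+ k * cst_t u t)%:E) (S_meas t0)).
Qed.

Lemma KP_mart s t : nonneg_pt s -> pt_le s t ->
  (forall A, joint_filtration N s A -> KP s t A) ->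
  (forall u : R, 0 < u -> u <= 1 -> forall A, joint_filtration N s A ->
     (\int[P]_(w in A) (M u t w)%:E = \int[P]_(w in A) (M u s w)%:E)%E).
Proof.
move=> s0 st H u u0 u1 A FA.
have mA := F_meas FA.
have t0 := nonneg_le s0 st.
have FB n : joint_filtration N s (A `&` [set w | S s w = n]).
  exact: (saI (@F_sa s) FA (S_F s0 (ptle_refl s) n)).
have hSs := S_meas s0.
have Mt0 : forall w, A w -> (0 <= (M u t w)%:E)%E.
  by move=> w _; rewrite lee_fin expR_ge0.
have Ms0 : forall w, A w -> (0 <= (M u s w)%:E)%E.
  by move=> w _; rewrite lee_fin expR_ge0.
rewrite (int_part P hSs mA (M_mfun (D:=A) u0 t0) Mt0).
rewrite (int_part P hSs mA (M_mfun (D:=A) u0 s0) Ms0).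
apply: eq_eseriesr => n _.
have sB : A `&` [set w | S s w = n] `<=` [set w | S s w = n] by move=> w [].
exact: (piece_mart s0 st (F_meas (FB n)) sB (H _ (FB n))).
Qed.


Lemma KP_law s t m : KP s t setT ->
  P [set w | Dinc s t w = m] = (pois (mu s t) m)%:E.
Proof. by move=> h; have := h m; rewrite setTI probability_setT mul1e. Qed.

Lemma indep_B s t (A : set T) (B : set nat) : nonneg_pt s -> pt_le s t ->
  measurable A -> KP s t A -> KP s t setT ->
  P (A `&` Dinc s t @^-1` B) = (P A * P (Dinc s t @^-1` B))%E.
Proof.
move=> s0 st mA hA hT.
have hD := Dinc_meas s0 st.
have mDB : measurable (Dinc s t @^-1` B).
  exact: (nfm_pre (sigma_algebra_measurable T) hD).
rewrite (meas_disc P (X := Dinc s t)) //; last exact: measurableI.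
rewrite [X in (_ * X)%E](meas_disc P (X := Dinc s t)) //.
rewrite (fineP P mA) -nneseriesZl; last by move=> i _; exact: measure_ge0.
apply: eq_eseriesr => k _.
case: (pselect (B k)) => Bk.
  have -> : A `&` Dinc s t @^-1` B `&` [set w | Dinc s t w = k] =
      A `&` [set w | Dinc s t w = k].
    apply/seteqP; split=> w /=; first by move=> [[]].
    by move=> [Aw Dw]; split=> //; split=> //; rewrite /preimage /= Dw.
  have -> : Dinc s t @^-1` B `&` [set w | Dinc s t w = k] =
      [set w | Dinc s t w = k].
    apply/seteqP; split=> w /=; first by move=> [].
    by move=> Dw; split=> //; rewrite /preimage /= Dw.
  by rewrite hA KP_law// -(fineP P mA) muleC.
have -> : A `&` Dinc s t @^-1` B `&` [set w | Dinc s t w = k] = set0.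
  by apply/seteqP; split=> w //= [[_ Bw] Dw]; apply: Bk; rewrite -Dw.
have -> : Dinc s t @^-1` B `&` [set w | Dinc s t w = k] = set0.
  by apply/seteqP; split=> w //= [Bw Dw]; apply: Bk; rewrite -Dw.
by rewrite measure0 mule0.
Qed.

Definition lawB (m : R) (B : set nat) : \bar R :=
  (\sum_(k <oo) ((if pselect (B k) then pois m k else 0)%:E))%E.

Lemma law_B s t (B : set nat) : nonneg_pt s -> pt_le s t -> KP s t setT ->
  P (Dinc s t @^-1` B) = lawB (mu s t) B.
Proof.
move=> s0 st hT.
have hD := Dinc_meas s0 st.
rewrite (meas_disc P (X := Dinc s t)) //; last first.
  exact: (nfm_pre (sigma_algebra_measurable T) hD).
apply: eq_eseriesr => k _.
case: (pselect (B k)) => Bk.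
  have -> : Dinc s t @^-1` B `&` [set w | Dinc s t w = k] =
      [set w | Dinc s t w = k].
    apply/seteqP; split=> w /=; first by move=> [].
    by move=> Dw; split=> //; rewrite /preimage /= Dw.
  exact: KP_law.
have -> : Dinc s t @^-1` B `&` [set w | Dinc s t w = k] = set0.
  by apply/seteqP; split=> w //= [Bw Dw]; apply: Bk; rewrite -Dw.
by rewrite measure0.
Qed.

Lemma F_mono s t : pt_le s t ->
  joint_filtration N s `<=` joint_filtration N t.
Proof.
move=> st; apply: smallest_sub; first exact: F_sa.
move=> _ [i [r [B [r0 [rs ->]]]]]; apply: sub_sigma_algebra.
by exists i, r, B; split=> //; split=> //; exact: le_trans rs (st i).
Qed.

Lemma Dinc_F s t : nonneg_pt s -> pt_le s t ->
  nfm (joint_filtration N t) (Dinc s t).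
Proof.
move=> s0 st; apply: (nfm_op (fun a b => a - b)%N (@F_sa t)).
  exact: (S_F (nonneg_le s0 st) (ptle_refl t)).
exact: S_F.
Qed.

Lemma pt_dot0 : pt_dot L (fun _ => 0) = 0.
Proof. by rewrite /pt_dot big1// => i _; rewrite mulr0. Qed.

Lemma S0 w : S (fun _ => 0) w = 0%N.
Proof. by rewrite /S big1// => i _; rewrite N_0. Qed.

Lemma fwd_poisson :
  (forall s t, nonneg_pt s -> pt_le s t ->
     forall A, joint_filtration N s A -> KP s t A) ->
  mp_poisson P L (fun t w => (\sum_(i < dim) N i (t i) w)%N).
Proof.
move=> KPall.
have law s t k : nonneg_pt s -> pt_le s t ->
    P [set w | Dinc s t w = k] = (pois (mu s t) k)%:E.
  move=> s0 st; apply: KP_law; apply: KPall => //; exact: saT (@F_sa s).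
split; first by move=> t k t0; exact: (S_meas t0).
split; first exact: S0.
split; first by move=> w s t s0 st; exact: S_mono.
split.
  move=> m c c0 chain B.
  have cnn : forall k, (k <= m)%N -> nonneg_pt (c k).
    elim=> [|k IH] km; first by rewrite c0 => i.
    apply: (nonneg_le (IH (ltnW km))).
    by case: (chain k km).
  pose X (k : 'I_m) := Dinc (c k) (c k.+1).
  pose E j := [set w | forall k : 'I_m, (k < j)%N -> B k (X k w)].
  have claim : forall j, (j <= m)%N ->
      joint_filtration N (c j) (E j) /\
      P (E j) = (\prod_(k < m | (k < j)%N) P (X k @^-1` B k))%E.
    elim=> [|j IH] jm.
      have -> : E 0%N = setT by apply/seteqP; split=> w //= _ k.
      split; first exact: saT (@F_sa _).
      by rewrite probability_setT big_pred0.
    have jm' : (j < m)%N by [].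
    have [FE PE] := IH (ltnW jm).
    pose o := Ordinal jm'.
    have cj := cnn j (ltnW jm).
    have st : pt_le (c j) (c j.+1) by case: (chain j jm').
    have eE : E j.+1 = E j `&` X o @^-1` B o.
      apply/seteqP; split=> w /=.
        move=> h; split; first by move=> k kj; apply: h; rewrite ltnS ltnW.
        exact: h.
      move=> [h1 h2] k; rewrite ltnS leq_eqVlt => /orP[/eqP kj|kj].
        by have -> : k = o by apply: val_inj.
      exact: h1.
    split.
      rewrite eE; apply: (saI (@F_sa (c j.+1))).
        exact: (F_mono st FE).
      exact: (nfm_pre (@F_sa _) (Dinc_F cj st)).
    rewrite eE (indep_B _ cj st (F_meas FE)); first last.
    - apply: KPall => //; exact: saT (@F_sa _).
    - exact: KPall.
    rewrite PE [in RHS](bigD1 o) //= muleC; congr (_ * _)%E.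
    apply: eq_bigl => k; apply/idP/andP => [kj|[kj1 ko]].
      split; first by rewrite ltnS ltnW.
      by apply/eqP => ko; move: kj; rewrite ko /= ltnn.
    move: kj1; rewrite ltnS leq_eqVlt => /orP[/eqP kj|//].
    by case/eqP: ko; apply: val_inj.
  have [_ Pm] := claim m (leqnn m).
  have -> : \bigcap_(k in [set: 'I_m]) (fun w => (S (c k.+1) w - S (c k) w)%N) @^-1` B k
       = E m.
    apply/seteqP; split=> w /= h k _; first exact: h.
    by apply: h; exact: ltn_ord.
  rewrite Pm; apply: eq_bigl => k; exact: ltn_ord.
split.
  move=> s t s' t' s0 st s0' st' e B.
  change (P (Dinc s t @^-1` B) = P (Dinc s' t' @^-1` B)).
  have hT1 : KP s t setT by apply: KPall => //; exact: saT (@F_sa _).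
  have hT2 : KP s' t' setT by apply: KPall => //; exact: saT (@F_sa _).
  rewrite (law_B B s0 st hT1) (law_B B s0' st' hT2); congr lawB.
  by rewrite /mu /pt_dot -!sumrB; apply: eq_bigr => i _; rewrite -!mulrBr e.
move=> t k t0.
have := law (fun _ => 0) t k (fun i => lexx 0) t0.
rewrite /mu pt_dot0 subr0.
have -> : [set w | Dinc (fun=> 0) t w = k] = [set w | S t w = k].
  by apply/seteqP; split=> w /=; rewrite /Dinc S0 subn0.
by [].
Qed.


Definition Xc (c : nat -> 'I_dim -> R) j w := Dinc (c j) (c j.+1) w.

Definition Cyl (c : nat -> 'I_dim -> R) n (x : seq nat) :=
  [set w | forall j, (j < n)%N -> Xc c j w = nth 0%N x j].

Lemma chain_cyl c n (x : seq nat) (K : set nat) :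
  mp_poisson P L (fun t w => (\sum_(i < dim) N i (t i) w)%N) ->
  c 0%N = (fun _ => 0) -> (forall k, (k < n.+1)%N -> pt_lt (c k) (c k.+1)) ->
  P (Cyl c n x `&` Xc c n @^-1` K) = (P (Cyl c n x) * P (Xc c n @^-1` K))%E.
Proof.
move=> hP c0 ch.
have [_ [_ [_ [hind _]]]] := hP.
have key K' : P (Cyl c n x `&` Xc c n @^-1` K') =
    ((\prod_(j < n) P (Xc c j @^-1` [set nth 0%N x j])) * P (Xc c n @^-1` K'))%E.
  have := hind n.+1 c c0 ch
    (fun j : 'I_n.+1 => if (j < n)%N then [set nth 0%N x j] else K').
  have -> : \bigcap_(k in [set: 'I_n.+1])
      (fun w => (\sum_(i < dim) N i (c k.+1 i) w -
                 \sum_(i < dim) N i (c k i) w)%N) @^-1`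
      (if (k < n)%N then [set nth 0%N x k] else K') =
      Cyl c n x `&` Xc c n @^-1` K'.
    apply/seteqP; split=> w /=.
      move=> h; split.
        move=> j jn; have := h (Ordinal (leqW jn)) I.
        by rewrite /= jn.
      by have := h ord_max I; rewrite /= ltnn.
    move=> [h1 h2] k _; case: ifP => kn; first exact: h1.
    have -> : k = ord_max.
      apply: val_inj => /=; apply/eqP; rewrite eqn_leq -ltnS ltn_ord.
      by rewrite leqNgt kn.
    exact: h2.
  move=> ->; rewrite big_ord_recr /= ltnn; congr (_ * _)%E.
  by apply: eq_bigr => j _; rewrite /= ltn_ord.
rewrite key; have := key setT.
by rewrite setIT probability_setT mule1 => ->.
Qed.

Definition ept (i : 'I_dim) (r : R) : 'I_dim -> R := fun j => if j == i then r else 0.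

Lemma S_e i r w : S (ept i r) w = N i r w.
Proof.
rewrite /S (bigD1 i) //= /ept eqxx big1 ?addn0 // => j ji.
by rewrite (negbTE ji) N_0.
Qed.

Lemma ept0 i : ept i 0 = (fun _ => 0).
Proof. by apply: funext => j; rewrite /ept; case: ifP. Qed.

Lemma ept_le i r r' : r <= r' -> pt_le (ept i r) (ept i r').
Proof. by move=> rr j; rewrite /ept; case: ifP. Qed.

Lemma ept_lt i r r' : r < r' -> pt_lt (ept i r) (ept i r').
Proof.
move=> rr; split; first exact/ept_le/ltW.
move=> e; have := congr1 (fun f => f i) e; rewrite /ept eqxx => err.
by rewrite err ltxx in rr.
Qed.

Lemma ept_nn i r : 0 <= r -> nonneg_pt (ept i r).
Proof. by move=> r0 j; rewrite /ept; case: ifP. Qed.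

Definition inter (Ni : R -> T -> nat) (l : seq (R * set nat)) : set T :=
  foldr (fun x A => Ni x.1 @^-1` x.2 `&` A) setT l.

Definition okl (a : R) (l : seq (R * set nat)) :=
  forall y, List.In y l -> 0 <= y.1 /\ y.1 <= a.

Lemma interP Ni l w : inter Ni l w <-> (forall y, List.In y l -> y.2 (Ni y.1 w)).
Proof.
elim: l => [|y l IH] /=; first by split.
split.
  move=> [h1 /IH h2] z [<-|zl]; [exact: h1| exact: h2].
by move=> h; split; [apply: h; left| apply/IH => z zl; apply: h; right].
Qed.

Lemma inter_cat Ni l1 l2 : inter Ni (l1 ++ l2) = inter Ni l1 `&` inter Ni l2.
Proof.
elim: l1 => [|y l IH] /=; first by rewrite setTI.
by rewrite IH setIA.
Qed.

Lemma indep_triv (Y X : set T) : X = setT \/ X = set0 ->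
  P (Y `&` X) = (P Y * P X)%E.
Proof.
case=> ->; first by rewrite setIT probability_setT mule1.
by rewrite setI0 measure0 mule0.
Qed.


Lemma inmap (y : R * set nat) (l : seq (R * set nat)) : List.In y l -> y.1 \in map fst l.
Proof.
elim: l => [//|z l IH] /= [<-|yl]; first by rewrite inE eqxx.
by rewrite inE IH ?orbT.
Qed.

Lemma PP i (l : seq (R * set nat)) (a b : R) k :
  mp_poisson P L (fun t w => (\sum_(i < dim) N i (t i) w)%N) ->
  0 <= a -> a <= b -> okl a l ->
  P ([set w | (N i b w - N i a w)%N = k] `&` inter (N i) l) =
  (P [set w | (N i b w - N i a w)%N = k] * P (inter (N i) l))%E.
Proof.
move=> hP a0 ab hl.
have [eab|ab'] := eqVneq a b.
  rewrite setIC muleC; apply: indep_triv; rewrite -eab.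
  case: (eqVneq k 0%N) => [->|k0]; [left|right]; apply/seteqP; split=> w //=.
    by rewrite subnn.
  by rewrite subnn => k0'; rewrite -k0' eqxx in k0.
have ab2 : a < b by rewrite lt_neqAle ab' ab.
have [ea0|a0'] := eqVneq a 0.
  apply: indep_triv.
  have e : inter (N i) l = [set w | forall y, List.In y l -> y.2 0%N].
    apply/seteqP; split=> w /= h.
      move/interP: h => h y yl; have := h y yl; have [y0 y1] := hl y yl.
      have -> : y.1 = 0 by apply/le_anti; rewrite y0 -ea0 y1.
      by rewrite N_0.
    apply/interP => y yl; have [y0 y1] := hl y yl.
    have -> : y.1 = 0 by apply/le_anti; rewrite y0 -ea0 y1.
    by rewrite N_0; apply: h.
  rewrite e; case: (pselect (forall y, List.In y l -> y.2 0%N)) => h; [left|right].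
    by apply/seteqP; split=> w //= _.
  by apply/seteqP; split=> w //=.
have a0s : 0 < a by rewrite lt_neqAle eq_sym a0' a0.
pose q := sort <=%R (undup (seq.filter (fun r => (0 < r) && (r < a)) (map fst l))).
pose Lc := 0 :: q ++ [:: a; b].
pose n := (size q).+1.
have sLc : size Lc = n.+2 by rewrite /Lc /= size_cat /= addn2.
have qP r : (r \in q) = ((0 < r) && (r < a)) && (r \in map fst l).
  by rewrite /q mem_sort mem_undup mem_filter.
have sortedq : sorted <%R q by rewrite /q sort_lt_sorted undup_uniq.
have sortedLc : sorted <%R Lc.
  rewrite /Lc (sorted_pairwise lt_trans) /= pairwise_cat.
  have h1 : all (fun x => 0 < x) (q ++ [:: a; b]).
    rewrite all_cat /= a0s (lt_trans a0s ab2) !andbT.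
    by apply/allP => x; rewrite qP => /andP[/andP[]].
  have h2 : allrel <%R q [:: a; b].
    apply/allrelP => x y; rewrite qP => /andP[/andP[_ xa] _].
    by rewrite !inE => /ssrbool.orP[/eqP->|/eqP->]//; exact: lt_trans xa ab2.
  rewrite h1 h2 -(sorted_pairwise lt_trans) sortedq /=.
  by rewrite ab2.
have allLc : all (fun x => 0 <= x) Lc.
  rewrite /Lc /= lexx all_cat /= a0 (ltW (lt_trans a0s ab2)) !andbT.
  by apply/allP => x; rewrite qP => /andP[/andP[/ltW]].
have Lc0 j : 0 <= nth 0 Lc j.
  case: (ltnP j (size Lc)) => jl; first exact: (all_nthP 0 allLc j jl).
  by rewrite nth_default.
pose c j := ept i (nth 0 Lc j).
have c0 : c 0%N = (fun _ => 0) by rewrite /c /= ept0.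
have ltLc kk : (kk < n.+1)%N -> nth 0 Lc kk < nth 0 Lc kk.+1.
  move=> kn; rewrite (lt_sorted_ltn_nth 0 sortedLc) ?inE ?sLc //.
  exact: ltnW.
have ch : forall kk, (kk < n.+1)%N -> pt_lt (c kk) (c kk.+1).
  by move=> kk kn; apply: ept_lt; exact: ltLc.
have nLa : nth 0 Lc n = a by rewrite /Lc /n /= nth_cat ltnn subnn.
have nLb : nth 0 Lc n.+1 = b.
  by rewrite /Lc /n /= nth_cat ltnNge leqnSn /= subSnn.
have Xn w : Xc c n w = (N i b w - N i a w)%N.
  by rewrite /Xc /Dinc /c !S_e nLa nLb.
have tele : forall J w, (J < size Lc)%N ->
    N i (nth 0 Lc J) w = (\sum_(j < J) Xc c j w)%N.
  elim=> [|J IH] w JL; first by rewrite big_ord0 /= N_0.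
  rewrite big_ord_recr /= -IH ?(ltnW JL)//.
  rewrite /Xc /Dinc /c !S_e subnKC //; apply: N_mono; first exact: Lc0.
  by apply/ltW/ltLc; rewrite -ltnS -sLc.
have memLc : forall y, List.In y l -> y.1 \in Lc.
  move=> y yl; have [y0 ya] := hl y yl.
  rewrite /Lc inE mem_cat.
  case: (eqVneq y.1 0) => [->|y0']; first by [].
  apply/ssrbool.orP; right; apply/ssrbool.orP.
  case: (eqVneq y.1 a) => [->|ya']; first by right; rewrite inE eqxx.
  left; rewrite qP inmap // andbT.
  by rewrite lt_neqAle eq_sym y0' y0 lt_neqAle ya' ya.
have idx_le : forall y, List.In y l -> (index y.1 Lc <= n)%N.
  move=> y yl; have := memLc y yl; rewrite -index_mem sLc ltnS leq_eqVlt.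
  case/ssrbool.orP => [/eqP ei|//].
  have := nth_index 0 (memLc y yl); rewrite ei nLb => yb.
  have [_ ya] := hl y yl; rewrite -yb in ya.
  by move: (lt_le_trans ab2 ya); rewrite ltxx.
have ey : forall y w, List.In y l ->
    N i y.1 w = (\sum_(j < index y.1 Lc) Xc c j w)%N.
  move=> y w yl; rewrite -tele ?index_mem ?memLc // nth_index //.
  exact: memLc.
pose condx (x : seq nat) := forall y, List.In y l ->
  y.2 (\sum_(j < index y.1 Lc) nth 0%N x j)%N.
pose E (x : seq nat) := [set w | (size x = n /\ condx x) /\ Cyl c n x w].
have eU : inter (N i) l = \bigcup_(x in setT) E x.
  apply/seteqP; split=> w.
    move=> /interP h; exists (map (fun j => Xc c j w) (iota 0 n)) => //.
    split; first split.
    - by rewrite size_map size_iota.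
    - move=> y yl; have := h y yl; rewrite (ey y w yl).
      congr (y.2 _); apply: eq_bigr => j _.
      rewrite (nth_map 0%N) ?size_iota ?nth_iota //.
        exact: (leq_trans (ltn_ord j) (idx_le y yl)).
      exact: (leq_trans (ltn_ord j) (idx_le y yl)).
    - move=> j jn; rewrite (nth_map 0%N) ?size_iota ?nth_iota //.
  move=> [x _ [[sx cx] cy]]; apply/interP => y yl.
  rewrite (ey y w yl); have := cx y yl.
  congr (y.2 _); apply: eq_bigr => j _; rewrite cy //.
  exact: (leq_trans (ltn_ord j) (idx_le y yl)).
have cnn j : nonneg_pt (c j) by apply: ept_nn.
have mX j : (j < n.+1)%N -> nfm measurable (Xc c j).
  by move=> jn; apply: Dinc_meas => //; case: (ch j jn).
have mCyl x : measurable (Cyl c n x).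
  have -> : Cyl c n x = \bigcap_(j in [set j | (j < n)%N])
      [set w | Xc c j w = nth 0%N x j].
    by apply/seteqP; split=> w /= h j jn; apply: h.
  apply: bigcap_measurable; first by exists 0%N.
  move=> j jn; apply: (mX j); exact: ltnW.
have mE x : measurable (E x).
  case: (pselect (size x = n /\ condx x)) => hx.
    have -> : E x = Cyl c n x by apply/seteqP; split=> w /=; [case | move=> h; split].
    exact: mCyl.
  have -> : E x = set0 by apply/seteqP; split=> w //= [/hx].
  exact: measurable0.
pose A := [set w | (N i b w - N i a w)%N = k].
have eA : A = Xc c n @^-1` [set k].
  by apply/seteqP; split=> w /=; rewrite Xn.
have mA : measurable A by rewrite eA; exact: (nfm_pre (sigma_algebra_measurable T) (mX n (ltnSn n))).
have disj : forall x y w, E x w -> E y w -> x = y.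
  move=> x y w [[sx _] cx] [[sy _] cy]; apply: (@eq_from_nth _ 0%N); first by rewrite sx sy.
  by move=> j; rewrite sx => jn; rewrite -cx // -cy.
have per : forall x, P (E x `&` A) = (P (E x) * (fine (P A))%:E)%E.
  move=> x; case: (pselect (size x = n /\ condx x)) => hx.
    have -> : E x = Cyl c n x by apply/seteqP; split=> w /=; [case | move=> h; split].
    by rewrite -fineP // eA chain_cyl.
  have -> : E x = set0 by apply/seteqP; split=> w //= [/hx].
  by rewrite set0I measure0 mul0e.
have H := @cunion_indep _ _ _ P _ E A (fine (P A)) mE mA (fineP_ge0 P A) disj per.
rewrite -eU in H.
by rewrite -/A setIC H -(fineP P mA) muleC.
Qed.


Lemma sa_bigcapI (G : set (set T)) (I : countType) (A : I -> set T) :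
  sigma_algebra setT G -> (forall i, G (A i)) -> G (\bigcap_(i in setT) A i).
Proof.
move=> sG GA.
have -> : \bigcap_(i in setT) A i =
    ~` \bigcup_n (if @pickle_inv I n is Some i then ~` A i else set0).
  apply/seteqP; split=> w /=.
    move=> h [n _]; case: pickle_inv => [i|//] /=; apply; exact: h.
  move=> h i _; apply: contrapT => nAi; apply: h; exists (pickle i) => //.
  by rewrite pickleK_inv.
apply: saC => //; apply: saU => // n; case: pickle_inv => [i|]; last exact: sa0.
exact: saC.
Qed.

Definition Gprod (s : 'I_dim -> R) := [set A : set T |
  exists l : 'I_dim -> seq (R * set nat), (forall i, okl (s i) (l i)) /\
    A = \bigcap_(i in [set: 'I_dim]) inter (N i) (l i)].

Lemma inter_F s i l : okl (s i) l -> joint_filtration N s (inter (N i) l).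
Proof.
elim: l => [|y l IH] hl /=; first exact: saT (@F_sa s).
apply: (saI (@F_sa s)).
  have [y0 y1] := hl y (or_introl erefl).
  exact: (nfm_pre (@F_sa s) (N_F y0 y1)).
by apply: IH => z zl; apply: hl; right.
Qed.

Lemma N_proc i r : 0 <= r -> nfm (process_sigma (N i)) (N i r).
Proof.
move=> r0 k; apply: sub_sigma_algebra; exists r, [set k].
by split.
Qed.

Lemma inter_proc a i l : okl a l -> process_sigma (N i) (inter (N i) l).
Proof.
have sG : sigma_algebra setT (process_sigma (N i)) by exact: smallest_sigma_algebra.
elim: l => [|y l IH] hl /=; first exact: saT sG.
apply: (saI sG).
  have [y0 _] := hl y (or_introl erefl).
  exact: (nfm_pre sG (N_proc y0)).
by apply: IH => z zl; apply: hl; right.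
Qed.

Lemma Gprod_F s : Gprod s `<=` joint_filtration N s.
Proof.
move=> _ [l [hl ->]]; apply: (sa_bigcapI (@F_sa s)) => i.
exact: inter_F.
Qed.

Lemma Gprod_T s : Gprod s setT.
Proof.
exists (fun _ => [::]); split; first by move=> i y.
by apply/seteqP; split=> w //= _ i _.
Qed.

Lemma Gprod_I s : setI_closed (Gprod s).
Proof.
move=> _ _ [l1 [h1 ->]] [l2 [h2 ->]].
exists (fun i => l1 i ++ l2 i); split.
  move=> i y yl; case: (List.in_app_or _ _ _ yl) => {}yl; [exact: h1|exact: h2].
apply/seteqP; split=> w /=.
  by move=> [H1 H2] i _; rewrite inter_cat; split; [exact: H1|exact: H2].
by move=> H; split=> i _; have := H i I; rewrite inter_cat => -[].
Qed.

Lemma Gen_Gprod s : [set A | exists i r (B : set nat), 0 <= r /\ r <= s i /\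
     A = N i r @^-1` B] `<=` Gprod s.
Proof.
move=> _ [i [r [B [r0 [rs ->]]]]].
exists (fun j => if j == i then [:: (r, B)] else [::]); split.
  move=> j y; case: eqP => [->|_] //= [<-|//]; by split.
apply/seteqP; split=> w /=.
  by move=> Bw j _; case: eqP => [->|_] //=.
by move=> h; have := h i I; rewrite eqxx /= => -[].
Qed.

Lemma Dinc_sum s t w : nonneg_pt s -> pt_le s t ->
  Dinc s t w = (\sum_(i < dim) (N i (t i) w - N i (s i) w))%N.
Proof.
move=> s0 st; rewrite /Dinc /S sumnB // => i _; exact: N_mono.
Qed.

Lemma core_indep s t m (A : set T) :
  mp_poisson P L (fun t w => (\sum_(i < dim) N i (t i) w)%N) ->
  independent_processes P N ->
  nonneg_pt s -> pt_le s t -> Gprod s A ->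
  P (A `&` [set w | Dinc s t w = m]) = (P A * P [set w | Dinc s t w = m])%E.
Proof.
move=> hP hI s0 st [l [hl eA]].
have sG i : sigma_algebra setT (process_sigma (N i)) by exact: smallest_sigma_algebra.
pose Di i w := (N i (t i) w - N i (s i) w)%N.
have hDi i : nfm (process_sigma (N i)) (Di i).
  apply: (nfm_op (fun a b => a - b)%N (sG i)).
    exact: (N_proc (le_trans (s0 i) (st i))).
  exact: (N_proc (s0 i)).
have mDi i : nfm measurable (Di i).
  apply: (nfm_op (fun a b => a - b)%N (sigma_algebra_measurable T)).
    exact: (@N_meas i (t i) (le_trans (s0 i) (st i))).
  exact: (@N_meas i (s i) (s0 i)).
pose E (f : {ffun 'I_dim -> 'I_m.+1}) :=
  [set w | (\sum_(i < dim) (f i : nat))%N = m /\ forall i, Di i w = f i].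
have eU : [set w | Dinc s t w = m] = \bigcup_(f in setT) E f.
  apply/seteqP; split=> w /=.
    move=> hw; rewrite Dinc_sum // in hw.
    have Dm i : (Di i w < m.+1)%N.
      by rewrite ltnS -hw (bigD1 i) //= leq_addr.
    exists [ffun i => inord (Di i w)] => //; split.
      by rewrite -[in RHS]hw; apply: eq_bigr => i _; rewrite ffunE inordK.
    by move=> i; rewrite ffunE inordK.
  move=> [f _ [sf hf]]; rewrite Dinc_sum // -sf.
  by apply: eq_bigr => i _; exact: (hf i).
have mA : measurable A by rewrite eA; exact: F_meas (Gprod_F (ex_intro _ l (conj hl erefl))).
have mE f : measurable (E f).
  case: (eqVneq (\sum_(i < dim) (f i : nat))%N m) => hf.
    have -> : E f = \bigcap_(i in setT) [set w | Di i w = f i].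
      by apply/seteqP; split=> w /=; [move=> [_ h] i _; exact: h| move=> h; split=> // i; exact: h].
    by apply: (sa_bigcapI (sigma_algebra_measurable T)) => i; exact: mDi.
  have -> : E f = set0 by apply/seteqP; split=> w //= [/eqP]; rewrite (negbTE hf).
  exact: measurable0.
have disj : forall f g w, E f w -> E g w -> f = g.
  move=> f g w [_ hf] [_ hg]; apply/ffunP => i; apply: val_inj => /=.
  by rewrite -(hf i) -(hg i).
have per : forall f, P (E f `&` A) = (P (E f) * (fine (P A))%:E)%E.
  move=> f; rewrite -fineP//.
  case: (eqVneq (\sum_(i < dim) (f i : nat))%N m) => hf; last first.
    have -> : E f = set0 by apply/seteqP; split=> w //= [/eqP]; rewrite (negbTE hf).
    by rewrite set0I measure0 mul0e.
  have -> : E f = \bigcap_(i in setT) [set w | Di i w = f i].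
    by apply/seteqP; split=> w /=; [move=> [_ h] i _; exact: h| move=> h; split=> // i; exact: h].
  have e1 : \bigcap_(i in setT) [set w | Di i w = f i] `&` A =
      \bigcap_(i in [set: 'I_dim]) ([set w | Di i w = f i] `&` inter (N i) (l i)).
    rewrite eA; apply/seteqP; split=> w /=.
      by move=> [h1 h2] i _; split; [exact: h1|exact: h2].
    by move=> h; split=> i _; have [] := h i I.
  rewrite e1 hI; last first.
    move=> i; apply: (saI (sG i)); first exact: (hDi i).
    exact: (inter_proc (hl i)).
  rewrite hI; last by move=> i; exact: (hDi i).
  rewrite eA hI; last by move=> i; exact: (inter_proc (hl i)).
  rewrite -big_split /=; apply: eq_bigr => i _.
  exact: (@PP i (l i) (s i) (t i) (f i) hP (s0 i) (st i) (hl i)).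
have H := @cunion_indep _ _ _ P _ E A (fine (P A)) mE mA (fineP_ge0 P A) disj per.
by rewrite -eU in H; rewrite setIC H -(fineP P mA) muleC.
Qed.


Lemma law_poisson s t m :
  mp_poisson P L (fun t w => (\sum_(i < dim) N i (t i) w)%N) ->
  nonneg_pt s -> pt_le s t ->
  P [set w | Dinc s t w = m] = (pois (mu s t) m)%:E.
Proof.
move=> hP s0 st.
have [_ [_ [_ [_ [hst hmarg]]]]] := hP.
pose d' := fun i => t i - s i.
have d0 : nonneg_pt d' by move=> i; rewrite /d' subr_ge0.
have := hst s t (fun _ => 0) d' s0 st (fun i => lexx 0) d0
  (fun i => esym (subr0 (d' i))) [set m].
move=> e.
have -> : [set w | Dinc s t w = m] =
    [set w | [set m] (\sum_(i < dim) N i (t i) w - \sum_(i < dim) N i (s i) w)%N]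
  by [].
rewrite e.
have -> : [set w | [set m] (\sum_(i < dim) N i (d' i) w -
                           \sum_(i < dim) N i 0 w)%N] =
    [set w | (\sum_(i < dim) N i (d' i) w)%N = m].
  by apply/seteqP; split=> w /=; have := S0 w; rewrite /S => ->; rewrite subn0.
rewrite hmarg //; congr EFin; rewrite /pois.
have -> : pt_dot L d' = mu s t.
  by rewrite /mu /pt_dot -sumrB; apply: eq_bigr => i _; rewrite mulrBr.
by [].
Qed.

Lemma indep_F s t m (A : set T) :
  mp_poisson P L (fun t w => (\sum_(i < dim) N i (t i) w)%N) ->
  independent_processes P N ->
  nonneg_pt s -> pt_le s t -> joint_filtration N s A ->
  P (A `&` [set w | Dinc s t w = m]) = (P A * P [set w | Dinc s t w = m])%E.
Proof.
move=> hP hI s0 st FA.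
have mD : measurable [set w | Dinc s t w = m] by exact: Dinc_meas.
pose c := fine (P [set w | Dinc s t w = m]).
have c0 : 0 <= c := fineP_ge0 P _.
have Gm : Gprod s `<=` measurable by move=> B hB; exact: F_meas (Gprod_F hB).
have cov : \bigcup_(k : nat) (fun _ => setT) k = [set: T].
  by apply/seteqP; split=> w // _; exists 0%N.
have agree : forall B, Gprod s B -> mrestr P mD B = mscale (NngNum c0) P B.
  move=> B hB; rewrite /mrestr /mscale /= core_indep //.
  by rewrite /c -fineP // muleC.
have fin : forall k : nat, (mrestr P mD ((fun _ => setT) k) < +oo)%E.
  move=> k; rewrite /mrestr /=; apply: (le_lt_trans (probability_le1 _ _) (ltry 1)).
  exact: measurableI.
have FG : <<s Gprod s >> A.
  exact: (sub_sigma_algebra2 (@Gen_Gprod s) FA).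
have H := @g_sigma_algebra_measure_unique _ _ T (Gprod s) Gm (fun _ => setT)
  (fun _ => @Gprod_T s) cov (mrestr P mD) (mscale (NngNum c0) P) (@Gprod_I s)
  agree fin A FG.
have H' : P (A `&` [set w | Dinc s t w = m]) = (c%:E * P A)%E by exact: H.
by rewrite H' /c -fineP // muleC.
Qed.

Lemma KPall_poisson :
  mp_poisson P L (fun t w => (\sum_(i < dim) N i (t i) w)%N) ->
  independent_processes P N ->
  forall s t, nonneg_pt s -> pt_le s t ->
  forall A, joint_filtration N s A -> KP s t A.
Proof.
move=> hP hI s t s0 st A FA m.
by rewrite indep_F // law_poisson.
Qed.

Lemma M_integrable u t : 0 < u -> u <= 1 -> nonneg_pt t ->
  P.-integrable setT (fun w => (M u t w)%:E).
Proof.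
move=> u0 u1 t0.
apply: (@measurable_bounded_integrable _ _ _ P (M u t) setT) => //.
- exact: (le_lt_trans (probability_le1 P measurableT) (ltry 1)).
- rewrite (M_fun t u0); exact: (mfun_natR (fun k => u ^+ k * cst_t u t) (S_meas t0)).
rewrite /bounded_near; near=> K => w _ /=.
rewrite M_eq// ger0_norm; last by rewrite mulr_ge0 ?expR_ge0// exprn_ge0// ltW.
apply: (@le_trans _ _ (cst_t u t)).
  exact: (ler_piMl (expR_ge0 _) (exprn_ile1 _ (ltW u0) u1)).
near: K; apply: nbhs_pinfty_ge; exact: num_real.
Unshelve. all: end_near.
Qed.

Lemma main_iff : independent_processes P N ->
  (forall u : R, 0 < u -> u <= 1 ->
     mp_martingale P (joint_filtration N) (M u)) <->
  mp_poisson P L (fun t w => (\sum_(i < dim) N i (t i) w)%N).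
Proof.
move=> hI; split.
  move=> hm; apply: fwd_poisson => s t s0 st.
  apply: mart_KP => // u u0 u1 A FA.
  by have [_ [_ h]] := hm u u0 u1; exact: h.
move=> hP u u0 u1; split.
  by move=> t t0; exact: M_integrable.
split.
  move=> t t0 B mB; rewrite (M_fun t u0).
  exact: (nfm_pre (@F_sa t) (S_F t0 (ptle_refl t)) ((fun k => u ^+ k * cst_t u t) @^-1` B)).
move=> s t s0 st A FA.
exact: (KP_mart s0 st (KPall_poisson hP hI s0 st) u0 u1 FA).
Qed.

End main.

Unset Implicit Arguments.

Theorem mainTheorem17 (dsp : measure_display) (T : measurableType dsp)
  (R : realType) (P : probability T R) (dim : nat)
  (N : 'I_dim -> R -> T -> nat) (L : 'I_dim -> R) :
  (0 < dim)%N ->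
  (forall i, simple_counting_process (N i)) ->
  independent_processes P N ->
  (forall i, 0 < L i) ->
  (forall u : R, 0 < u -> u <= 1 ->
     mp_martingale P (joint_filtration N)
       (fun t w => expR ((\sum_(i < dim) (N i (t i) w)%:R * ln u)
                         - pt_dot L t * (u - 1))))
  <->
  mp_poisson P L (fun t w => (\sum_(i < dim) N i (t i) w)%N).
Proof.
move=> _ hN hI hL.
exact: (main_iff hN hL hI).
Qed.
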